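(* Let $G$ be an antimatroid on a ground set $S$ with $|S|=n$, with Tutte polynomial $T(G;x,y)=\sum_{i,j}b_{i,j}x^iy^j$. For $i\ge0$ let $a_{i,1}$ be the number of convex sets with $i$ elements and exactly one interior point, and for $p\in S$ let $\mathcal{C}_p$ be the collection of convex sets $C$ with $\mathrm{int}(C)=\{p\}$. Then $$b_{0,1}=\sum_{i=0}^{n}(-1)^ia_{i,1}=\sum_{p\in\mathrm{int}(S)}\ \sum_{C\in\mathcal{C}_p}(-1)^{|C|}.$$
   Context: An antimatroid on a finite set $S$ is a family $\mathcal{F}\subseteq 2^S$ of feasible sets with $\emptyset\in\mathcal{F}$, $S\in\mathcal{F}$, closed under union, and accessible: every nonempty $F\in\mathcal{F}$ contains some $x$ with $F\setminus\{x\}\in\mathcal{F}$. Its rank function is $r(A)=\max\{|F|:F\in\mathcal{F},F\subseteq A\}$, and its Tutte polynomial is $T(G;x,y)=\sum_{A\subseteq S}(x-1)^{r(S)-r(A)}(y-1)^{|A|-r(A)}$. A set $C$ is convex if $S\setminus C\in\mathcal{F}$; the convex closure $\overline{A}$ of $A$ is the smallest convex set containing $A$. For convex $C$, $p\in C$ is extreme if $p\notin\overline{C\setminus\{p\}}$; $\mathrm{int}(C)$ is the set of non-extreme points of $C$ (in particular $\mathrm{int}(S)$ is the set of non-extreme points of $S$). *)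

(* Defs.v *)
From HB Require Import structures.
From mathcomp Require Import all_boot all_order all_algebra.
Set Implicit Arguments. Unset Strict Implicit. Unset Printing Implicit Defensive.
Import Order.TTheory GRing.Theory Num.Theory.
Local Open Scope ring_scope.

(* The ground set S is the whole finite type T; feasible sets form F. *)
Definition is_antimatroid (T : finType) (F : {set {set T}}) : Prop :=
  [/\ set0 \in F, [set: T] \in F,
      (forall A B, A \in F -> B \in F -> A :|: B \in F) &
      (forall A, A \in F -> A != set0 -> exists2 x, x \in A & A :\ x \in F)].

Definition arank (T : finType) (F : {set {set T}}) (A : {set T}) : nat :=
  \max_(B in F | B \subset A) #|B|.

(* Tutte polynomial as a polynomial in x with coefficients polynomials in y:
   T(G;x,y) = sum_A (x-1)^(r(S)-r(A)) (y-1)^(|A|-r(A)). *)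
Definition tutte (T : finType) (F : {set {set T}}) : {poly {poly int}} :=
  \sum_(A : {set T})
     ('X - 1) ^+ (arank F [set: T] - arank F A)%N
     * ((('X - 1) ^+ (#|A| - arank F A)%N) %:P).

Definition tutte_coef (T : finType) (F : {set {set T}}) (i j : nat) : int :=
  ((tutte F)`_i)`_j.

Definition convex (T : finType) (F : {set {set T}}) (C : {set T}) : bool :=
  ~: C \in F.

Definition cclosure (T : finType) (F : {set {set T}}) (A : {set T}) : {set T} :=
  \bigcap_(C | convex F C && (A \subset C)) C.

Definition interior (T : finType) (F : {set {set T}}) (C : {set T}) : {set T} :=
  [set p in C | p \in cclosure F (C :\ p)].

(* Main.v *)
Require Import Defs.
From mathcomp Require Import all_boot all_order all_algebra.
From mathcomp Require Import zify.
Set Implicit Arguments. Unset Strict Implicit.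
Import Order.TTheory GRing.Theory Num.Theory.
Local Open Scope ring_scope.

Section Anti.
Variables (T : finType) (F : {set {set T}}).
Hypothesis hF : is_antimatroid F.

Lemma F0 : set0 \in F. Proof. by case: hF. Qed.
Lemma FT : [set: T] \in F. Proof. by case: hF. Qed.
Lemma FU (A B : {set T}) : A \in F -> B \in F -> A :|: B \in F. Proof. by case: hF => _ _ H _; apply: H. Qed.
Lemma Facc (A : {set T}) : A \in F -> A != set0 -> exists2 x, x \in A & A :\ x \in F.
Proof. by case: hF => _ _ _ H; apply: H. Qed.

Lemma cl_convex (A : {set T}) : convex F (cclosure F A).
Proof.
rewrite /convex /cclosure setC_bigcap.
apply: (big_ind (fun X => X \in F)); [exact: F0| exact: FU|].
by move=> C /andP[]; rewrite /convex.
Qed.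

Lemma sub_cl (A : {set T}) : A \subset cclosure F A.
Proof. by apply/bigcapsP => C /andP[]. Qed.

Lemma cl_min (A C : {set T}) : convex F C -> A \subset C -> cclosure F A \subset C.
Proof. by move=> cC sAC; apply: bigcap_inf; rewrite cC sAC. Qed.

Lemma cl_mono (A B : {set T}) : A \subset B -> cclosure F A \subset cclosure F B.
Proof.
move=> sAB; apply: cl_min; first exact: cl_convex.
exact: subset_trans sAB (sub_cl B).
Qed.

Lemma arank_eq (A : {set T}) : arank F A = #|~: cclosure F (~: A)|.
Proof.
apply/eqP; rewrite eqn_leq; apply/andP; split.
  apply/bigmax_leqP => B /andP[BF sBA]; apply: subset_leq_card.
  rewrite -(setCK B) setCS; apply: cl_min; first by rewrite /convex setCK.
  by rewrite setCS.
apply: leq_bigmax_cond; rewrite (cl_convex (~: A) : _ \in F) /=.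
by rewrite -setCS setCK sub_cl.
Qed.

Lemma augment n : forall B A : {set T}, #|B| = n -> B \in F -> A \in F -> ~~ (B \subset A) ->
  exists2 x, x \in B :\: A & x |: A \in F.
Proof.
elim: n => [|n IH] B A cB BF AF nBA.
  by move: cB => /cards0_eq BE; rewrite BE sub0set in nBA.
have [y yB By] : exists2 y, y \in B & B :\ y \in F.
  apply: Facc => //; apply/eqP => BE; by rewrite BE sub0set in nBA.
case sBA: (B :\ y \subset A).
  have yA : y \notin A.
    apply/negP => yA; move/negP: nBA; apply; apply/subsetP => z zB.
    case: (eqVneq z y) => [->//|zy]; apply: (subsetP sBA); by rewrite !inE zy.
  exists y; first by rewrite inE yA.
  have -> : y |: A = A :|: B.
    apply/setP => z; rewrite !inE; case: (eqVneq z y) => [->|zy]; first by rewrite yB orbT.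
    apply/idP/idP => [/orP[]// -> //|/orP[->//|zB]].
    by apply: (subsetP sBA); rewrite !inE zy.
  exact: FU.
have [|x xB xA] := IH (B :\ y) A _ By AF (negbT sBA).
  by rewrite (cardsD1 y B) yB in cB; case: cB.
exists x => //; move: xB; rewrite !inE; by case/andP => -> /andP[_ ->].
Qed.

Lemma cl_char (C D : {set T}) : convex F C ->
  (cclosure F D == C) = (C :\: interior F C \subset D) && (D \subset C).
Proof.
move=> cC; apply/eqP/andP => [<-|[sED sDC]].
  split; last exact: sub_cl.
  apply/subsetP => p; rewrite !inE => /andP[pI pC]; apply/negPn/negP => pD.
  move/negP: pI; apply; rewrite pC /=.
  have: D \subset cclosure F D :\ p.
    apply/subsetP => z zD; rewrite !inE (subsetP (sub_cl D) z zD) andbT.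
    by apply/negP => /eqP zp; move: pD; rewrite -zp zD.
  by move/cl_mono/subsetP; apply.
have sKC := cl_min (A:=D) cC sDC.
apply/eqP; rewrite eqEsubset sKC /=; apply/negPn/negP => nCK.
have [|x xBA xAF] := augment (B:=~: cclosure F D) (A:=~: C) (erefl _) (cl_convex D) cC.
  by rewrite setCS.
move: xBA; rewrite !inE negbK => /andP[xC xK].
have xD : x \notin D by apply/negP => xD; rewrite (subsetP (sub_cl D) x xD) in xK.
have xI : x \in interior F C.
  apply/negPn/negP => xI; move/negP: xD; apply; apply: (subsetP sED).
  by rewrite inE xI.
move: xI; rewrite inE => /andP[_ xcl].
have cCx : convex F (C :\ x) by rewrite /convex setCD setUC.
have := subsetP (cl_min cCx (subxx _)) _ xcl.
by rewrite !inE eqxx.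
Qed.

End Anti.

Lemma prod_ind (T : finType) (R : comNzRingType) (K : {set T}) (a : R) :
  \prod_i (if i \in K then a else 1) = a ^+ #|K|.
Proof. by rewrite -big_mkcond /= prodr_const. Qed.

Lemma sum_interval (T : finType) (R : comNzRingType) (C I : {set T}) (a : R) :
  I \subset C ->
  \sum_(D : {set T} | (C :\: I \subset D) && (D \subset C)) a ^+ (#|C| - #|D|)
  = (a + 1) ^+ #|I|.
Proof.
move=> sIC.
pose f := fun i : T => if i \in C then 1 else 0 : R.
pose g := fun i : T => if i \in I then a else if i \in C then 0 else 1 : R.
rewrite -prod_ind.
rewrite (eq_bigr (fun i => f i + g i)); last first.
  move=> i _; rewrite /f /g; case: ifP => iI.
    by rewrite (subsetP sIC i iI) addrC.
  by case: ifP => iC; rewrite ?addr0 ?add0r.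
rewrite bigA_distr big_mkcond /=.
apply: eq_bigr => J _.
case: ifP => [/andP[sEJ sJC] | ncond].
  rewrite (eq_bigr (fun i => if i \in C :\: J then a else 1)); last first.
    move=> i _; rewrite /f /g !inE.
    case iJ: (i \in J); first by rewrite (subsetP sJC i iJ).
    case iC: (i \in C) => /=; last by case: ifP => // iI; rewrite (subsetP sIC i iI) in iC.
    case iI: (i \in I) => //.
    by have := subsetP sEJ i; rewrite !inE iI iC iJ => /(_ isT).
  rewrite prod_ind cardsD; congr (_ ^+ (_ - _)).
  by rewrite (setIidPr sJC).
have [i fi0] : exists i, (if i \in J then f i else g i) = 0.
  move/negbT: ncond; rewrite negb_and => /orP[/subsetPn [i] | /subsetPn [i iJ iC]].
    rewrite !inE => /andP[iI iC] iJ; exists i; by rewrite (negbTE iJ) /g (negbTE iI) iC.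
  by exists i; rewrite iJ /f (negbTE iC).
by rewrite (bigD1 i) //= fi0 mul0r.
Qed.

Lemma int_sub (T : finType) (F : {set {set T}}) (C : {set T}) : interior F C \subset C.
Proof. by apply/subsetP => p; rewrite inE => /andP[]. Qed.

Lemma tutte_formula (T : finType) (F : {set {set T}}) : is_antimatroid F ->
  tutte F = \sum_(C | convex F C) ('X - 1)^+#|C| * ('X ^+ #|interior F C|)%:P.
Proof.
move=> hF.
have cl0 : cclosure F set0 = set0.
  apply/eqP; rewrite -subset0; apply: cl_min => //.
  by rewrite /convex setC0 (FT hF).
have rT : arank F [set: T] = #|T| by rewrite (arank_eq hF) setCT cl0 setC0 cardsT.
rewrite /tutte (reindex_inj (@setC_inj T)) /=.
transitivity (\sum_(D : {set T}) ('X - 1)^+#|cclosure F D|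
      * ((('X - 1)^+(#|cclosure F D| - #|D|))%:P) : {poly {poly int}}).
  apply: eq_bigr => D _; rewrite rT !(arank_eq hF) setCK.
  have h1 := cardsC D; have h2 := cardsC (cclosure F D).
  have h3 := subset_leq_card (sub_cl F D).
  congr (_ ^+ _ * (_ ^+ _)%:P); lia.
rewrite (partition_big (cclosure F) (convex F)) /=; last by move=> D _; exact: cl_convex hF _.
apply: eq_bigr => C cC.
under eq_bigr => D /eqP HD do rewrite HD.
rewrite -mulr_sumr -rmorph_sum /=.
under eq_bigl => D do rewrite (cl_char hF _ cC).
by rewrite sum_interval ?int_sub // subrK.
Qed.

Lemma int_mono (T : finType) (F : {set {set T}}) (C : {set T}) p : is_antimatroid F ->
  p \in interior F C -> p \in interior F [set: T].
Proof.
move=> hF; rewrite !inE => /andP[pC pcl].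
have sub := cl_mono hF (setSD [set p] (subsetT C)).
exact: (subsetP sub).
Qed.

Lemma card_sum1 (U : finType) (A : {set U}) : (#|A|%:R : int) = \sum_(C in A) 1.
Proof. by rewrite -sum1_card natr_sum. Qed.

Theorem corollary4p5 (T : finType) (F : {set {set T}}) :
  is_antimatroid F ->
  let a1 := fun i : nat =>
    #|[set C : {set T} | convex F C & (#|C| == i) && (#|interior F C| == 1)%N]| in
  tutte_coef F 0 1 = \sum_(0 <= i < #|T|.+1) (-1 : int) ^+ i * (a1 i)%:R
  /\ \sum_(0 <= i < #|T|.+1) (-1 : int) ^+ i * (a1 i)%:R
     = \sum_(p in interior F [set: T])
         \sum_(C : {set T} | convex F C && (interior F C == [set p])) (-1 : int) ^+ #|C|.
Proof.
move=> hF a1.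
have E1 : tutte_coef F 0 1 =
    \sum_(C | convex F C) (-1 : int)^+#|C| * (#|interior F C| == 1)%:R.
  rewrite /tutte_coef (tutte_formula hF) !coef_sum; apply: eq_bigr => C _.
  rewrite coefMC -horner_coef0 !hornerE.
  have -> : ((-1)^+#|C| : {poly int}) = ((-1)^+#|C|)%:P by rewrite rmorphXn rmorphN1.
  by rewrite coefCM coefXn eq_sym.
have E2 : \sum_(0 <= i < #|T|.+1) (-1 : int) ^+ i * (a1 i)%:R =
    \sum_(C | convex F C && (#|interior F C| == 1)%N) (-1 : int)^+#|C|.
  rewrite big_mkord.
  rewrite [RHS](partition_big (fun C : {set T} => (inord #|C| : 'I_#|T|.+1)) xpredT) //=.
  apply: eq_bigr => i _.
  rewrite /a1 card_sum1 mulr_sumr.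
  apply: eq_big => [C|C].
    rewrite inE -andbA; congr (_ && _); rewrite andbC; congr (_ && _).
    by rewrite -val_eqE /= inordK // ltnS max_card.
  by rewrite inE => /andP[_ /andP[/eqP <- _]]; rewrite mulr1.
split; first by rewrite E1 E2 big_mkcondr /=; apply: eq_bigr => C _; case: ifP; rewrite ?mulr1 ?mulr0.
rewrite E2 (exchange_big_dep (fun C => convex F C && (#|interior F C| == 1)%N)) /=; last first.
  by move=> p C _ /andP[-> /eqP ->]; rewrite cards1.
apply: eq_bigr => C /andP[cC /cards1P [p Hp]].
rewrite (big_pred1 p) // => q /=; rewrite Hp cC /=.
apply/andP/eqP => [[_ /eqP/set1_inj]//|->]; split=> //.
by apply: (int_mono (C:=C) hF); rewrite Hp set11.
Qed.
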